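(* Let $\gamma>0$, $b\ge0$, $t_0\in\mathbb{R}$, and let $\beta\ge0$ be arbitrary. Let $w_n$ ($n\ge0$) be defined on $[0,\infty)\times\mathbb{R}$ by $w_n(x_3,t)=0$ for $t\le t_0$ and, for $t>t_0$, \[ w_0(x_3,t)=\frac{1}{4(\pi\gamma)^{3/2}\sqrt{t-t_0}}e^{-\frac{x_3^2}{4\gamma(t-t_0)}},\qquad w_n(x_3,t)=\frac{-\beta}{\sqrt{\pi\gamma}}\int_{t_0}^t\frac{w_{n-1}(0,s)}{\sqrt{t-s}}e^{-\frac{x_3^2}{4\gamma(t-s)}}\,ds\ \ (n\ge1). \] Then the series $\sum_{n=0}^\infty w_n(x_3,t)$ converges absolutely and locally uniformly on $[0,\infty)\times(t_0,\infty)$. Consequently the series $\sum_{n=0}^\infty v_n(x,t)$ with $v_n(x,t)=\frac{e^{-b(t-t_0)}}{t-t_0}e^{-\frac{x_1^2+x_2^2}{4\gamma(t-t_0)}}w_n(x_3,t)$ converges absolutely and locally uniformly on $\overline{\mathbb{R}^3_+}\times(t_0,\infty)$, regardless of the value of $\beta$.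
   Context: $\overline{\mathbb{R}^3_+}=\{x\in\mathbb{R}^3:x_3\ge0\}$. The $v_n$ are the terms of the Born series (Robin impedance term $\beta u$ treated as a perturbation of the Neumann problem) for the half-space diffusion equation $(\partial_t-\gamma\Delta+b)u=0$ with boundary condition $\gamma\partial_\nu u+\beta u=\delta(x_1)\delta(x_2)\delta(t-t_0)$. *)

(* Defs.v *)
From Stdlib Require Import Reals Lra ClassicalEpsilon.
Open Scope R_scope.

Definition is_improper_int (f : R -> R) (a b l : R) : Prop :=
  (forall c d, a < c -> c <= d -> d < b -> exists _ : Riemann_integrable f c d, True) /\
  (forall eps, 0 < eps -> exists delta, 0 < delta /\
     forall c d (pr : Riemann_integrable f c d),
       a < c -> c < a + delta -> b - delta < d -> d < b -> c <= d ->
       Rabs (RiemannInt pr - l) < eps).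

Definition improper_int (f : R -> R) (a b : R) : R :=
  epsilon (inhabits 0) (fun l => is_improper_int f a b l).

Fixpoint w (gamma beta t0 : R) (n : nat) (x3 t : R) {struct n} : R :=
  if Rle_dec t t0 then 0 else
  match n with
  | O => / (4 * Rpower (PI * gamma) (3/2) * sqrt (t - t0))
           * exp (- (x3 ^ 2) / (4 * gamma * (t - t0)))
  | S m => (- beta / sqrt (PI * gamma)) *
           improper_int (fun s => w gamma beta t0 m 0 s / sqrt (t - s)
                                   * exp (- (x3 ^ 2) / (4 * gamma * (t - s)))) t0 t
  end.

Definition v (gamma b beta t0 : R) (n : nat) (x1 x2 x3 t : R) : R :=
  exp (- b * (t - t0)) / (t - t0)
  * exp (- (x1 ^ 2 + x2 ^ 2) / (4 * gamma * (t - t0)))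
  * w gamma beta t0 n x3 t.

Definition series_loc_unif_2 (t0 : R) (u : nat -> R -> R -> R) (S : R -> R -> R) : Prop :=
  forall x3 t, 0 <= x3 -> t0 < t ->
  exists delta, 0 < delta /\
  forall eps, 0 < eps -> exists N : nat, forall n : nat, (N <= n)%nat ->
  forall y s, 0 <= y -> t0 < s -> Rabs (y - x3) < delta -> Rabs (s - t) < delta ->
    Rabs (sum_f_R0 (fun k => u k y s) n - S y s) < eps.

Definition series_loc_unif_4 (t0 : R) (u : nat -> R -> R -> R -> R -> R)
  (S : R -> R -> R -> R -> R) : Prop :=
  forall x1 x2 x3 t, 0 <= x3 -> t0 < t ->
  exists delta, 0 < delta /\
  forall eps, 0 < eps -> exists N : nat, forall n : nat, (N <= n)%nat ->
  forall y1 y2 y3 s, 0 <= y3 -> t0 < s ->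
    Rabs (y1 - x1) < delta -> Rabs (y2 - x2) < delta ->
    Rabs (y3 - x3) < delta -> Rabs (s - t) < delta ->
    Rabs (sum_f_R0 (fun k => u k y1 y2 y3 s) n - S y1 y2 y3 s) < eps.

(* Main.v *)
Require Import Defs.
From Stdlib Require Import Reals Lra Lia ClassicalEpsilon.
From Coquelicot Require Import Coquelicot.
Open Scope R_scope.


Definition IMP (f : R -> R) (a b l : R) : Prop :=
  (forall c d, a < c -> c <= d -> d < b -> ex_RInt f c d) /\
  (forall eps, 0 < eps -> exists delta, 0 < delta /\
     forall c d, a < c -> c < a + delta -> b - delta < d -> d < b -> c <= d ->
       Rabs (RInt f c d - l) < eps).

Lemma IMP_is f a b l : IMP f a b l -> is_improper_int f a b l.
Proof.
  intros [H1 H2]; split.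
  - intros c d ? ? ?. exists (ex_RInt_Reals_0 _ _ _ (H1 c d H H0 H3)). exact I.
  - intros eps He. destruct (H2 eps He) as [d [Hd H]]. exists d; split; auto.
    intros c d' pr ? ? ? ? ?. rewrite <- RInt_Reals. apply H; auto.
Qed.

Lemma is_IMP f a b l : is_improper_int f a b l -> IMP f a b l.
Proof.
  intros [H1 H2]; split.
  - intros c d ? ? ?. destruct (H1 c d H H0 H3) as [pr _]. now apply ex_RInt_Reals_1.
  - intros eps He. destruct (H2 eps He) as [d [Hd H]]. exists d; split; auto.
    intros c d' ? ? ? ? ?. destruct (H1 c d' H0 H6 H5) as [pr _].
    rewrite (RInt_Reals _ _ _ pr). apply H; auto.
Qed.

Lemma small_zero x : (forall eps, 0 < eps -> Rabs x < eps) -> x = 0.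
Proof.
  intros H. destruct (Req_dec x 0) as [|Hx]; auto.
  assert (Ha : 0 < Rabs x) by (apply Rabs_pos_lt; auto).
  specialize (H (Rabs x / 2) ltac:(lra)). lra.
Qed.

Lemma IMP_unique f a b l1 l2 : a < b -> IMP f a b l1 -> IMP f a b l2 -> l1 = l2.
Proof.
  intros Hab [_ H1] [_ H2].
  apply Rminus_diag_uniq, small_zero. intros eps He.
  destruct (H1 (eps/2) ltac:(lra)) as [d1 [Hd1 K1]].
  destruct (H2 (eps/2) ltac:(lra)) as [d2 [Hd2 K2]].
  set (d := Rmin (Rmin d1 d2) ((b - a)/2)).
  assert (0 < d) by (unfold d; repeat apply Rmin_pos; lra).
  assert (d <= d1 /\ d <= d2 /\ d <= (b-a)/2) as [? [? ?]].
  { unfold d. repeat split; [eapply Rle_trans; [apply Rmin_l|apply Rmin_l]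
      | eapply Rle_trans; [apply Rmin_l|apply Rmin_r] | apply Rmin_r]. }
  specialize (K1 (a + d/2) (b - d/2) ltac:(lra) ltac:(lra) ltac:(lra) ltac:(lra) ltac:(lra)).
  specialize (K2 (a + d/2) (b - d/2) ltac:(lra) ltac:(lra) ltac:(lra) ltac:(lra) ltac:(lra)).
  replace (l1 - l2) with ((RInt f (a + d / 2) (b - d / 2) - l2) - (RInt f (a + d / 2) (b - d / 2) - l1)) by ring.
  eapply Rle_lt_trans; [apply Rabs_triang|]. rewrite Rabs_Ropp. lra.
Qed.

Lemma improper_int_eq f a b l : a < b -> IMP f a b l -> improper_int f a b = l.
Proof.
  intros Hab H. unfold improper_int.
  assert (E : exists l, is_improper_int f a b l) by (exists l; now apply IMP_is).
  pose proof (epsilon_spec (inhabits 0) _ E) as S.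
  apply is_IMP in S. eapply IMP_unique; eauto.
Qed.

Lemma IMP_ext f g a b l : (forall x, a < x < b -> f x = g x) -> IMP f a b l -> IMP g a b l.
Proof.
  intros E [H1 H2]; split.
  - intros c d ? ? ?. apply (ex_RInt_ext (V:=R_NormedModule) f).
    + intros x [Hx1 Hx2]. apply E. rewrite Rmin_left in Hx1 by lra. rewrite Rmax_right in Hx2 by lra. lra.
    + auto.
  - intros eps He. destruct (H2 eps He) as [d [Hd H]]. exists d; split; auto.
    intros c d' ? ? ? ? ?. rewrite <- (RInt_ext (V:=R_CompleteNormedModule) f). apply H; auto.
    intros x [Hx1 Hx2]. apply E. rewrite Rmin_left in Hx1 by lra. rewrite Rmax_right in Hx2 by lra. lra.
Qed.

Lemma cont_exRInt (f : R -> R) (a b c d : R) : (forall x, a < x < b -> continuous f x) ->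
  a < c -> c < b -> a < d -> d < b -> ex_RInt f c d.
Proof.
  intros H ? ? ? ?. apply (ex_RInt_continuous (V:=R_CompleteNormedModule)). intros z [Hz1 Hz2]. apply H.
  split; [eapply Rlt_le_trans; [|apply Hz1] | eapply Rle_lt_trans; [apply Hz2|]].
  - apply Rmin_case; lra.
  - apply Rmax_case; lra.
Qed.

Lemma cont_pt_eps (G : R -> R) a : continuity_pt G a ->
  forall eps, 0 < eps -> exists d, 0 < d /\ forall x, Rabs (x - a) < d -> Rabs (G x - G a) < eps.
Proof.
  intros H eps He. unfold continuity_pt, continue_in, limit1_in, limit_in in H.
  destruct (H eps He) as [d [Hd H']]. exists d; split; [lra|].
  intros x Hx. destruct (Req_dec x a) as [->|Hxa].
  - rewrite Rminus_diag, Rabs_R0; lra.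
  - apply (H' x). split; [split; [exact I| auto] | exact Hx].
Qed.

Lemma FTC (G g : R -> R) a b : a < b -> continuity_pt G a -> continuity_pt G b ->
  (forall x, a < x < b -> is_derive G x (g x)) ->
  (forall x, a < x < b -> continuous g x) -> IMP g a b (G b - G a).
Proof.
  intros Hab HA HB HD HC; split.
  - intros c d ? ? ?. apply (cont_exRInt g a b); auto; lra.
  - intros eps He.
    destruct (cont_pt_eps G a HA (eps/2) ltac:(lra)) as [da [Hda KA]].
    destruct (cont_pt_eps G b HB (eps/2) ltac:(lra)) as [db [Hdb KB]].
    exists (Rmin da db); split; [apply Rmin_pos; lra|].
    intros c d ? ? ? ? ?.
    assert (Rmin da db <= da) by apply Rmin_l. assert (Rmin da db <= db) by apply Rmin_r.
    assert (E : RInt g c d = G d - G c).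
    { apply is_RInt_unique.
      assert (HR := is_RInt_derive (V:=R_CompleteNormedModule) G g c d).
      unfold minus, plus, opp in HR; simpl in HR. apply HR.
      - intros x [Hx1 Hx2]. apply HD. rewrite Rmin_left in Hx1 by lra. rewrite Rmax_right in Hx2 by lra. lra.
      - intros x [Hx1 Hx2]. apply HC. rewrite Rmin_left in Hx1 by lra. rewrite Rmax_right in Hx2 by lra. lra. }
    rewrite E.
    specialize (KA c ltac:(rewrite Rabs_right; lra)).
    specialize (KB d ltac:(rewrite Rabs_left; lra)).
    replace (G d - G c - (G b - G a)) with ((G d - G b) - (G c - G a)) by ring.
    eapply Rle_lt_trans; [apply Rabs_triang|]. rewrite Rabs_Ropp. lra.
Qed.

Lemma inv_small d : 0 < d -> exists N : nat, forall n, (n >= N)%nat -> / (INR n + 1) < d.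
Proof.
  intros Hd. destruct (INR_archimed d 1 Hd) as [N HN]. exists N. intros n Hn.
  apply le_INR in Hn. assert (0 <= INR N) by apply pos_INR.
  apply (Rmult_lt_reg_r (INR n + 1)); [lra|]. rewrite Rinv_l by lra. nra.
Qed.

Lemma cauchy_right (H : R -> R) a :
  (forall eps, 0 < eps -> exists d, 0 < d /\ forall x y, a < x < a + d -> a < y < a + d ->
     Rabs (H x - H y) < eps) ->
  exists l, forall eps, 0 < eps -> exists d, 0 < d /\ forall x, a < x < a + d -> Rabs (H x - l) < eps.
Proof.
  intros HC.
  set (u := fun k : nat => H (a + / (INR k + 1))).
  assert (Hpos : forall k, 0 < / (INR k + 1)).
  { intros k. apply Rinv_0_lt_compat. pose proof (pos_INR k). lra. }
  assert (CC : Cauchy_crit u).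
  { intros eps He. destruct (HC eps He) as [d [Hd K]]. destruct (inv_small d Hd) as [N HN].
    exists N. intros n m Hn Hm. unfold Rdist, u. apply K.
    - split; [specialize (Hpos n); lra| specialize (HN n Hn); lra].
    - split; [specialize (Hpos m); lra| specialize (HN m Hm); lra]. }
  destruct (Rcomplete.R_complete u CC) as [l Hl].
  exists l. intros eps He. destruct (HC (eps/2) ltac:(lra)) as [d [Hd K]].
  exists d; split; auto. intros x Hx.
  destruct (inv_small d Hd) as [N1 HN1]. destruct (Hl (eps/2) ltac:(lra)) as [N2 HN2].
  set (k := max N1 N2).
  specialize (HN1 k (Nat.le_max_l _ _)). specialize (HN2 k (Nat.le_max_r _ _)).
  unfold Rdist, u in HN2.
  specialize (K x (a + / (INR k + 1)) Hx ltac:(specialize (Hpos k); lra)).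
  replace (H x - l) with ((H x - H (a + / (INR k + 1))) + (H (a + / (INR k + 1)) - l)) by ring.
  eapply Rle_lt_trans; [apply Rabs_triang|]. lra.
Qed.

Lemma cauchy_left (H : R -> R) b :
  (forall eps, 0 < eps -> exists d, 0 < d /\ forall x y, b - d < x < b -> b - d < y < b ->
     Rabs (H x - H y) < eps) ->
  exists l, forall eps, 0 < eps -> exists d, 0 < d /\ forall x, b - d < x < b -> Rabs (H x - l) < eps.
Proof.
  intros HC. destruct (cauchy_right (fun x => H (- x)) (- b)) as [l Hl].
  - intros eps He. destruct (HC eps He) as [d [Hd K]]. exists d; split; auto.
    intros x y Hx Hy. apply K; lra.
  - exists l. intros eps He. destruct (Hl eps He) as [d [Hd K]]. exists d; split; auto.
    intros x Hx. replace x with (- - x) by ring. apply K. lra.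
Qed.

Lemma chasles (f : R -> R) x y z : ex_RInt f x y -> ex_RInt f y z ->
  RInt f x y + RInt f y z = RInt f x z.
Proof. intros. now rewrite <- (RInt_Chasles (V:=R_CompleteNormedModule) f x y z). Qed.

Lemma abs_bnd (f g : R -> R) c d : c <= d -> ex_RInt f c d -> ex_RInt g c d ->
  (forall x, c < x < d -> Rabs (f x) <= g x) -> Rabs (RInt f c d) <= RInt g c d.
Proof.
  intros Hcd Hf Hg Hb. apply Rabs_le. split.
  - assert (E := RInt_opp (V:=R_CompleteNormedModule) f c d Hf).
    assert (Ho := ex_RInt_opp (V:=R_CompleteNormedModule) f c d Hf).
    unfold opp in E, Ho; simpl in E, Ho.
    assert (RInt (fun x => - f x) c d <= RInt g c d).
    { apply RInt_le; auto. intros x Hx. specialize (Hb x Hx).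
      pose proof (Rabs_le_between (f x) (g x)) as [K _]. specialize (K Hb). lra. }
    rewrite E in H. lra.
  - apply RInt_le; auto. intros x Hx. specialize (Hb x Hx).
    eapply Rle_trans; [apply Rle_abs|auto].
Qed.

Lemma DOM (f g : R -> R) a b lg : a < b ->
  (forall x, a < x < b -> continuous f x) -> IMP g a b lg ->
  (forall x, a < x < b -> Rabs (f x) <= g x) ->
  exists l, IMP f a b l /\ Rabs l <= lg.
Proof.
  intros Hab HC Hg Hb. pose proof Hg as [Hg1 Hg2].
  assert (exF : forall c d, a < c < b -> a < d < b -> ex_RInt f c d).
  { intros c d Hc Hd. apply (cont_exRInt f a b); auto; lra. }
  assert (exG : forall c d, a < c < b -> a < d < b -> ex_RInt g c d).
  { intros c d Hc Hd. destruct (Rle_dec c d).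
    - apply Hg1; lra.
    - apply (ex_RInt_swap (V:=R_NormedModule)). apply Hg1; lra. }
  assert (bnd : forall c d, a < c -> c <= d -> d < b -> Rabs (RInt f c d) <= RInt g c d).
  { intros c d ? ? ?. apply abs_bnd; [lra | apply exF; lra | apply exG; lra |].
    intros x Hx. apply Hb. lra. }
  assert (gsmall : forall eps, 0 < eps -> exists dl, 0 < dl /\
     (forall x y, a < x -> x <= y -> y < a + dl -> RInt g x y < eps) /\
     (forall x y, b - dl < x -> x <= y -> y < b -> RInt g x y < eps)).
  { intros eps He. destruct (Hg2 (eps/2) ltac:(lra)) as [d0 [Hd0 K]].
    set (dl := Rmin d0 ((b - a)/2)).
    assert (0 < dl) by (apply Rmin_pos; lra).
    assert (dl <= d0) by apply Rmin_l. assert (dl <= (b-a)/2) by apply Rmin_r.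
    exists dl; split; auto; split.
    - intros x y ? ? ?.
      rewrite <- (Rplus_0_r (RInt g x y)).
      rewrite <- (Rplus_opp_r (RInt g y (b - dl/2))).
      rewrite <- Rplus_assoc, chasles by (apply exG; lra).
      pose proof (K x (b - dl/2) ltac:(lra) ltac:(lra) ltac:(lra) ltac:(lra) ltac:(lra)) as K1.
      pose proof (K y (b - dl/2) ltac:(lra) ltac:(lra) ltac:(lra) ltac:(lra) ltac:(lra)) as K2.
      apply Rabs_def2 in K1. apply Rabs_def2 in K2. lra.
    - intros x y ? ? ?.
      assert (E : RInt g (a + dl/2) x + RInt g x y = RInt g (a + dl/2) y) by (apply chasles; apply exG; lra).
      pose proof (K (a + dl/2) x ltac:(lra) ltac:(lra) ltac:(lra) ltac:(lra) ltac:(lra)) as K1.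
      pose proof (K (a + dl/2) y ltac:(lra) ltac:(lra) ltac:(lra) ltac:(lra) ltac:(lra)) as K2.
      apply Rabs_def2 in K1. apply Rabs_def2 in K2. lra. }
  set (m := (a + b) / 2).
  set (H := fun x => RInt f m x).
  assert (Hdiff : forall x y, a < x < b -> a < y < b -> H y - H x = RInt f x y).
  { intros x y Hx Hy. unfold H. rewrite <- (chasles f m x y); [ring| apply exF; unfold m; lra | apply exF; lra]. }
  assert (Hsym : forall x y, a < x < b -> a < y < b ->
     (forall u v, a < u < b -> a < v < b -> u <= v -> Rabs (H u - H v) < 0 + 1 -> True) -> True) by auto.
  clear Hsym.
  assert (HHb : forall x y, a < x -> x <= y -> y < b -> Rabs (H x - H y) <= RInt g x y).
  { intros x y ? ? ?. rewrite Rabs_minus_sym, Hdiff by lra. apply bnd; lra. }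
  destruct (cauchy_right H a) as [lA HA].
  { intros eps He. destruct (gsmall eps He) as [dl [Hdl [G1 _]]].
    exists (Rmin dl ((b-a)/2)); split; [apply Rmin_pos; lra|].
    assert (Rmin dl ((b-a)/2) <= dl) by apply Rmin_l. assert (Rmin dl ((b-a)/2) <= (b-a)/2) by apply Rmin_r.
    intros x y Hx Hy. destruct (Rle_dec x y).
    - eapply Rle_lt_trans; [apply HHb; lra| apply G1; lra].
    - rewrite Rabs_minus_sym. eapply Rle_lt_trans; [apply HHb; lra| apply G1; lra]. }
  destruct (cauchy_left H b) as [lB HB].
  { intros eps He. destruct (gsmall eps He) as [dl [Hdl [_ G2]]].
    exists (Rmin dl ((b-a)/2)); split; [apply Rmin_pos; lra|].
    assert (Rmin dl ((b-a)/2) <= dl) by apply Rmin_l. assert (Rmin dl ((b-a)/2) <= (b-a)/2) by apply Rmin_r.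
    intros x y Hx Hy. destruct (Rle_dec x y).
    - eapply Rle_lt_trans; [apply HHb; lra| apply G2; lra].
    - rewrite Rabs_minus_sym. eapply Rle_lt_trans; [apply HHb; lra| apply G2; lra]. }
  assert (Hf : IMP f a b (lB - lA)).
  { split.
    - intros c d ? ? ?. apply exF; lra.
    - intros eps He. destruct (HA (eps/2) ltac:(lra)) as [dA [HdA KA]].
      destruct (HB (eps/2) ltac:(lra)) as [dB [HdB KB]].
      exists (Rmin (Rmin dA dB) ((b-a)/2)); split; [repeat apply Rmin_pos; lra|].
      assert (Rmin (Rmin dA dB) ((b-a)/2) <= dA) by (eapply Rle_trans; [apply Rmin_l|apply Rmin_l]).
      assert (Rmin (Rmin dA dB) ((b-a)/2) <= dB) by (eapply Rle_trans; [apply Rmin_l|apply Rmin_r]).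
      assert (Rmin (Rmin dA dB) ((b-a)/2) <= (b-a)/2) by apply Rmin_r.
      intros c d ? ? ? ? ?. rewrite <- Hdiff by lra.
      specialize (KA c ltac:(lra)). specialize (KB d ltac:(lra)).
      replace (H d - H c - (lB - lA)) with ((H d - lB) - (H c - lA)) by ring.
      eapply Rle_lt_trans; [apply Rabs_triang|]. rewrite Rabs_Ropp. lra. }
  exists (lB - lA); split; auto.
  set (l := lB - lA) in *.
  destruct (Rle_dec (Rabs l) lg) as [|Hn]; auto. exfalso.
  set (e := (Rabs l - lg) / 2).
  assert (0 < e) by (unfold e; lra).
  destruct Hf as [_ Hf2].
  destruct (Hf2 e H0) as [d1 [Hd1 K1]]. destruct (Hg2 e H0) as [d2 [Hd2 K2]].
  set (d := Rmin (Rmin d1 d2) ((b - a)/2)).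
  assert (0 < d) by (unfold d; repeat apply Rmin_pos; lra).
  assert (d <= d1 /\ d <= d2 /\ d <= (b-a)/2) as [? [? ?]].
  { unfold d. repeat split; [eapply Rle_trans; [apply Rmin_l|apply Rmin_l]
      | eapply Rle_trans; [apply Rmin_l|apply Rmin_r] | apply Rmin_r]. }
  specialize (K1 (a + d/2) (b - d/2) ltac:(lra) ltac:(lra) ltac:(lra) ltac:(lra) ltac:(lra)).
  specialize (K2 (a + d/2) (b - d/2) ltac:(lra) ltac:(lra) ltac:(lra) ltac:(lra) ltac:(lra)).
  specialize (bnd (a + d/2) (b - d/2) ltac:(lra) ltac:(lra) ltac:(lra)).
  apply Rabs_def2 in K2.
  assert (Rabs l <= Rabs (l - RInt f (a + d/2) (b - d/2)) + Rabs (RInt f (a + d/2) (b - d/2))).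
  { replace l with ((l - RInt f (a + d/2) (b - d/2)) + RInt f (a + d/2) (b - d/2)) at 1 by ring.
    apply Rabs_triang. }
  rewrite Rabs_minus_sym in H5. unfold e in *. lra.
Qed.

Lemma SCALE (f g : R -> R) t0 t l k : t0 < t -> IMP g 0 1 l ->
  (forall s, t0 < s < t -> continuous f s) ->
  (forall u, 0 < u < 1 -> f (t0 + (t - t0) * u) = k * g u) ->
  IMP f t0 t (k * (t - t0) * l).
Proof.
  intros Ht [Hg1 Hg2] HC HE. set (L := t - t0) in *. split.
  - intros c d ? ? ?. apply (cont_exRInt f t0 t); auto; lra.
  - intros eps He.
    assert (HkL : 0 < Rabs k * L + 1) by (pose proof (Rabs_pos k); unfold L; nra).
    destruct (Hg2 (eps / (Rabs k * L + 1))) as [dg [Hdg K]].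
    { apply Rdiv_lt_0_compat; lra. }
    exists (dg * L); split; [unfold L; nra|].
    intros c d ? ? ? ? ?.
    set (c' := (c - t0) / L). set (d' := (d - t0) / L).
    assert (Ec : L * c' + t0 = c) by (unfold c', L; field; lra).
    assert (Ed : L * d' + t0 = d) by (unfold d', L; field; lra).
    assert (c'1 : 0 < c') by (unfold c', L; apply Rdiv_lt_0_compat; lra).
    assert (c'2 : c' < dg) by (unfold c'; apply Rmult_lt_reg_r with L; [unfold L; lra|];
         unfold Rdiv; rewrite Rmult_assoc, Rinv_l by (unfold L; lra); unfold L in *; lra).
    assert (d'1 : d' < 1) by (unfold d'; apply Rmult_lt_reg_r with L; [unfold L; lra|];
         unfold Rdiv; rewrite Rmult_assoc, Rinv_l by (unfold L; lra); unfold L in *; lra).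
    assert (d'2 : 1 - dg < d') by (unfold d'; apply Rmult_lt_reg_r with L; [unfold L; lra|];
         unfold Rdiv; rewrite Rmult_assoc, Rinv_l by (unfold L; lra); unfold L in *; lra).
    assert (cd' : c' <= d') by (unfold c', d'; unfold Rdiv; apply Rmult_le_compat_r;
         [left; apply Rinv_0_lt_compat; unfold L; lra| lra]).
    assert (exg : ex_RInt g c' d') by (apply Hg1; lra).
    assert (E : RInt f c d = k * L * RInt g c' d').
    { assert (E1 := RInt_comp_lin (V:=R_CompleteNormedModule) f L t0 c' d').
      rewrite Ec, Ed in E1. rewrite <- E1 by (apply (cont_exRInt f t0 t); auto; lra).
      assert (E2 := RInt_scal (V:=R_CompleteNormedModule) g c' d' (k * L) exg).
      transitivity (scal (k * L) (RInt g c' d')); [|reflexivity].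
      rewrite <- E2. apply (RInt_ext (V:=R_CompleteNormedModule)).
      intros x [Hx1 Hx2]. rewrite Rmin_left in Hx1 by lra. rewrite Rmax_right in Hx2 by lra.
      unfold scal; simpl; unfold mult; simpl.
      rewrite (Rplus_comm (L * x) t0), HE by lra. ring. }
    rewrite E. specialize (K c' d' c'1 ltac:(lra) ltac:(lra) d'1 cd').
    replace (k * L * RInt g c' d' - k * L * l) with ((k * L) * (RInt g c' d' - l)) by ring.
    rewrite Rabs_mult, (Rabs_mult k L), (Rabs_right L) by (unfold L; lra).
    apply Rle_lt_trans with ((Rabs k * L) * (eps / (Rabs k * L + 1))).
    + apply Rmult_le_compat_l; [pose proof (Rabs_pos k); unfold L in *; nra| lra].
    + replace (Rabs k * L * (eps / (Rabs k * L + 1))) with (eps - eps / (Rabs k * L + 1)) by (field; lra).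
      assert (0 < eps / (Rabs k * L + 1)) by (apply Rdiv_lt_0_compat; lra). lra.
Qed.

Lemma cR (f g : R -> R) x : continuous f x -> continuous g x -> continuous (fun y => f y * g y) x.
Proof. intros. apply (continuous_mult (K:=R_AbsRing) f g); auto. Qed.
Lemma cP (f g : R -> R) x : continuous f x -> continuous g x -> continuous (fun y => f y + g y) x.
Proof. intros. apply (continuous_plus (K:=R_AbsRing) (V:=R_NormedModule) f g); auto. Qed.
Lemma cM (f g : R -> R) x : continuous f x -> continuous g x -> continuous (fun y => f y - g y) x.
Proof. intros. apply (continuous_minus (K:=R_AbsRing) (V:=R_NormedModule) f g); auto. Qed.
Lemma cD (f g : R -> R) x : continuous f x -> continuous g x -> g x <> 0 -> continuous (fun y => f y / g y) x.
Proof. intros. apply cR; auto. apply continuous_Rinv_comp; auto. Qed.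
Lemma cC (c x : R) : continuous (fun _ : R => c) x.
Proof. apply continuous_const. Qed.
Lemma cI (x : R) : continuous (fun y : R => y) x.
Proof. apply continuous_id. Qed.
Lemma c2pt (f : R -> R) x : continuous f x -> continuity_pt f x.
Proof. intros H. now apply continuity_pt_filterlim. Qed.

Definition P (n : nat) (x : R) : R := sqrt x ^ n / sqrt x.
Definition gg (n : nat) (u : R) : R := P n u / sqrt (1 - u).
Definition J (n : nat) : R := improper_int (gg n) 0 1.

Lemma gg_cont n u : 0 < u < 1 -> continuous (gg n) u.
Proof.
  intros Hu. unfold gg, P. apply (ex_derive_continuous (K:=R_AbsRing) (V:=R_NormedModule)).
  auto_derive. repeat split; try lra.
  - apply Rgt_not_eq, sqrt_lt_R0; lra.
  - apply Rgt_not_eq, sqrt_lt_R0; lra.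
Qed.

Lemma sqrt_pos' x : 0 < x -> 0 < sqrt x.
Proof. apply sqrt_lt_R0. Qed.

Lemma J0_spec : IMP (gg 0) 0 1 (J 0).
Proof.
  set (G := fun u => 2 * sqrt u - 2 * sqrt (1 - u)).
  set (d := fun u => / sqrt u + / sqrt (1 - u)).
  assert (HF : IMP d 0 1 (G 1 - G 0)).
  { apply FTC; [lra| | | |].
    - apply c2pt. unfold G. apply cM; apply cR; try apply cC; apply continuous_sqrt_comp;
        [apply cI| apply cM; [apply cC|apply cI]].
    - apply c2pt. unfold G. apply cM; apply cR; try apply cC; apply continuous_sqrt_comp;
        [apply cI| apply cM; [apply cC|apply cI]].
    - intros x Hx. unfold G, d. auto_derive.
      + repeat split; try lra; apply Rgt_not_eq, sqrt_lt_R0; lra.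
      + replace (1 + - x) with (1 - x) by ring.
        assert (0 < sqrt x) by (apply sqrt_lt_R0; lra).
        assert (0 < sqrt (1 - x)) by (apply sqrt_lt_R0; lra).
        field; lra.
    - intros x Hx. unfold d. apply (ex_derive_continuous (K:=R_AbsRing) (V:=R_NormedModule)).
      auto_derive. repeat split; try lra; apply Rgt_not_eq, sqrt_lt_R0; lra. }
  destruct (DOM (gg 0) d 0 1 (G 1 - G 0)) as [l [Hl _]]; auto; try lra.
  - intros; apply gg_cont; auto.
  - intros u Hu. unfold gg, P, d. simpl.
    assert (ha : 0 < sqrt u) by (apply sqrt_lt_R0; lra).
    assert (hb : 0 < sqrt (1 - u)) by (apply sqrt_lt_R0; lra).
    assert (Ea : sqrt u * sqrt u = u) by (apply sqrt_sqrt; lra).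
    assert (Eb : sqrt (1 - u) * sqrt (1 - u) = 1 - u) by (apply sqrt_sqrt; lra).
    set (a := sqrt u) in *. set (b := sqrt (1 - u)) in *.
    rewrite Rabs_right.
    + assert (1 <= a + b) by nra.
      apply Rmult_le_reg_r with (a * b); [nra|].
      replace (1 / a / b * (a * b)) with 1 by (field; lra).
      replace ((/ a + / b) * (a * b)) with (a + b) by (field; lra). lra.
    + apply Rle_ge. unfold Rdiv. apply Rmult_le_pos; [apply Rmult_le_pos|]; try lra;
        left; apply Rinv_0_lt_compat; auto.
  - unfold J. rewrite (improper_int_eq _ _ _ l); auto; lra.
Qed.

Lemma exp_le' x y : x <= y -> exp x <= exp y.
Proof. intros [H|H]; [left; now apply exp_increasing| subst; lra]. Qed.

Lemma exp_pow_INR x m : exp x ^ m = exp (INR m * x).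
Proof.
  induction m as [|m IH]. { simpl. rewrite Rmult_0_l, exp_0; ring. }
  change (exp x ^ S m) with (exp x * exp x ^ m).
  rewrite IH, <- exp_plus, S_INR. f_equal. ring.
Qed.

Lemma powbnd s m : 0 <= s <= 1 ->
  s ^ m <= / ((1 + INR m / 4 * (1 - s * s)) * sqrt (1 + INR m / 4 * (1 - s * s))).
Proof.
  intros Hs. set (w := INR m / 4 * (1 - s * s)).
  assert (Hm : 0 <= INR m) by apply pos_INR.
  assert (Hw : 0 <= w) by (unfold w; apply Rmult_le_pos; nra).
  apply Rle_trans with (exp (INR m * (s - 1))).
  { rewrite <- exp_pow_INR. apply pow_incr. split; [lra|].
    pose proof (exp_ineq1_le (s - 1)). lra. }
  apply Rle_trans with (exp (- (2 * w))).
  { apply exp_le'. unfold w.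
    assert (0 <= INR m * ((1-s)*(1-s))) by (apply Rmult_le_pos; nra). nra. }
  rewrite exp_Ropp. apply Rinv_le_contravar.
  { apply Rmult_lt_0_compat; [lra| apply sqrt_lt_R0; lra]. }
  replace (2 * w) with (w + w) by ring. rewrite exp_plus.
  pose proof (exp_ineq1_le w).
  assert (Hs1 : sqrt (1 + w) * sqrt (1 + w) = 1 + w) by (apply sqrt_sqrt; lra).
  assert (Hs2 : 1 <= sqrt (1 + w)) by (pattern 1 at 1; rewrite <- sqrt_1; apply sqrt_le_1_alt; lra).
  assert (sqrt (1 + w) * 1 <= sqrt (1 + w) * sqrt (1 + w)) by (apply Rmult_le_compat_l; lra).
  assert (sqrt (1 + w) <= 1 + w) by lra.
  apply Rle_trans with ((1 + w) * (1 + w)).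
  - apply Rmult_le_compat_l; lra.
  - apply Rmult_le_compat; lra.
Qed.

Lemma JS_spec m : IMP (gg (S m)) 0 1 (J (S m)) /\ Rabs (J (S m)) <= 2 / sqrt (1 + INR m / 4).
Proof.
  set (lam := INR m / 4).
  assert (Hlam : 0 <= lam) by (unfold lam; pose proof (pos_INR m); lra).
  set (G := fun u => -2 * sqrt (1 - u) / sqrt (1 + lam * (1 - u))).
  set (d := fun u => / (sqrt (1 - u) * (1 + lam * (1 - u)) * sqrt (1 + lam * (1 - u)))).
  assert (Hsq : forall u, u <= 1 -> 0 < sqrt (1 + lam * (1 - u))).
  { intros u Hu. apply sqrt_lt_R0. nra. }
  assert (HF : IMP d 0 1 (G 1 - G 0)).
  { apply FTC; [lra| | | |].
    - apply c2pt. unfold G. apply cD.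
      + apply cR; [apply cC|]. apply continuous_sqrt_comp. apply cM; [apply cC|apply cI].
      + apply continuous_sqrt_comp. apply cP; [apply cC|]. apply cR; [apply cC|].
        apply cM; [apply cC|apply cI].
      + apply Rgt_not_eq, Hsq; lra.
    - apply c2pt. unfold G. apply cD.
      + apply cR; [apply cC|]. apply continuous_sqrt_comp. apply cM; [apply cC|apply cI].
      + apply continuous_sqrt_comp. apply cP; [apply cC|]. apply cR; [apply cC|].
        apply cM; [apply cC|apply cI].
      + apply Rgt_not_eq, Hsq; lra.
    - intros x Hx. unfold G, d. auto_derive.
      + repeat split; try lra; try nra. apply Rgt_not_eq, Hsq; lra.
      + replace (1 + - x) with (1 - x) by ring.
        assert (HA : 0 < sqrt (1 - x)) by (apply sqrt_lt_R0; lra).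
        assert (HB : 0 < sqrt (1 + lam * (1 - x))) by (apply Hsq; lra).
        assert (EA : sqrt (1 - x) * sqrt (1 - x) = 1 - x) by (apply sqrt_sqrt; lra).
        assert (EB : sqrt (1 + lam * (1 - x)) * sqrt (1 + lam * (1 - x)) = 1 + lam * (1 - x))
          by (apply sqrt_sqrt; nra).
        rewrite <- EB.
        set (A := sqrt (1 - x)) in *. set (B := sqrt (1 + lam * (1 - x))) in *.
        assert (El : lam = (B * B - 1) / (A * A)) by (rewrite EB, EA; field; lra).
        clearbody A B. rewrite El, sqrt_square by lra. field. lra.
    - intros x Hx. unfold d. apply (ex_derive_continuous (K:=R_AbsRing) (V:=R_NormedModule)).
      auto_derive. repeat split; try lra; try nra.
      assert (0 < sqrt (1 + - x)) by (apply sqrt_lt_R0; lra).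
      assert (0 < sqrt (1 + lam * (1 + - x))) by (apply sqrt_lt_R0; nra).
      apply Rgt_not_eq. apply Rmult_lt_0_compat; [|auto]. apply Rmult_lt_0_compat; nra. }
  assert (EG : G 1 - G 0 = 2 / sqrt (1 + INR m / 4)).
  { unfold G. replace (1 - 1) with 0 by ring. replace (1 - 0) with 1 by ring. rewrite sqrt_0, sqrt_1, !Rmult_0_r, !Rplus_0_r, !Rmult_1_r.
    fold lam. assert (0 < sqrt (1 + lam)) by (apply sqrt_lt_R0; lra). unfold Rdiv. rewrite sqrt_1, Rinv_1. field. lra. }
  destruct (DOM (gg (S m)) d 0 1 (G 1 - G 0)) as [l [Hl Hb]]; auto; try lra.
  - intros; apply gg_cont; auto.
  - intros u Hu. unfold gg, P, d.
    assert (ha : 0 < sqrt u) by (apply sqrt_lt_R0; lra).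
    assert (hb : 0 < sqrt (1 - u)) by (apply sqrt_lt_R0; lra).
    assert (Ea : sqrt u * sqrt u = u) by (apply sqrt_sqrt; lra).
    pose proof (powbnd (sqrt u) m ltac:(split; [lra|]; rewrite <- sqrt_1; apply sqrt_le_1_alt; lra)) as K.
    rewrite Ea in K. fold lam in K.
    assert (hc : 0 < sqrt (1 + lam * (1 - u))) by (apply Hsq; lra).
    assert (0 <= sqrt u ^ m) by (apply pow_le; lra).
    replace (sqrt u ^ S m / sqrt u / sqrt (1 - u)) with (sqrt u ^ m / sqrt (1 - u))
      by (simpl; field; lra).
    rewrite Rabs_right by (apply Rle_ge; unfold Rdiv; apply Rmult_le_pos; [lra| left; apply Rinv_0_lt_compat; lra]).
    replace (/ (sqrt (1 - u) * (1 + lam * (1 - u)) * sqrt (1 + lam * (1 - u))))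
      with (/ ((1 + lam * (1 - u)) * sqrt (1 + lam * (1 - u))) * / sqrt (1 - u)) by (assert (0 <= lam * (1 - u)) by (apply Rmult_le_pos; lra); field; repeat split; lra).
    unfold Rdiv. apply Rmult_le_compat_r; [left; apply Rinv_0_lt_compat; lra|]. exact K.
  - unfold J. rewrite (improper_int_eq _ _ _ l) by (auto; lra). split; [auto | unfold lam in EG |- *; rewrite <- EG; exact Hb].
Qed.

Definition C0 (gamma : R) : R := / (4 * Rpower (PI * gamma) (3/2)).
Fixpoint cc (gamma beta : R) (n : nat) : R :=
  match n with
  | O => C0 gamma
  | S m => (- beta / sqrt (PI * gamma)) * (cc gamma beta m * J m)
  end.

Lemma J_IMP n : IMP (gg n) 0 1 (J n).
Proof. destruct n; [apply J0_spec | apply JS_spec]. Qed.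

Lemma P_nonneg n x : 0 < x -> 0 <= P n x.
Proof.
  intros Hx. unfold P. assert (0 < sqrt x) by (apply sqrt_lt_R0; lra).
  unfold Rdiv. apply Rmult_le_pos; [apply pow_le; lra| left; apply Rinv_0_lt_compat; lra].
Qed.

Lemma P_mult n x y : 0 < x -> 0 < y -> P n (x * y) = P n x * P n y.
Proof.
  intros Hx Hy. unfold P. rewrite sqrt_mult by lra. rewrite Rpow_mult_distr.
  assert (0 < sqrt x) by (apply sqrt_lt_R0; lra). assert (0 < sqrt y) by (apply sqrt_lt_R0; lra).
  field. split; lra.
Qed.

Lemma P_S n x : 0 < x -> P (S n) x = P n x * sqrt x.
Proof.
  intros Hx. unfold P. assert (0 < sqrt x) by (apply sqrt_lt_R0; lra). simpl. field. lra.
Qed.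

Lemma exp_le1 y : y <= 0 -> exp y <= 1.
Proof. intros H. rewrite <- exp_0. apply exp_le'. auto. Qed.

Lemma key_cont gamma t0 t n c x s : 0 < gamma -> t0 < s < t ->
  continuous (fun s => c * P n (s - t0) / sqrt (t - s) * exp (- x ^ 2 / (4 * gamma * (t - s)))) s.
Proof.
  intros Hg Hs. unfold P. apply (ex_derive_continuous (K:=R_AbsRing) (V:=R_NormedModule)).
  auto_derive. repeat split; try lra.
  - apply Rgt_not_eq, sqrt_lt_R0; lra.
  - apply Rgt_not_eq, sqrt_lt_R0; lra.
  - apply Rgt_not_eq. apply Rmult_lt_0_compat; lra.
Qed.

Lemma exp_neg_le1 gamma x L : 0 < gamma -> 0 < L -> 0 < exp (- x ^ 2 / (4 * gamma * L)) <= 1.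
Proof.
  intros Hg HL. split; [apply exp_pos|]. apply exp_le1.
  assert (0 <= x ^ 2 * / (4 * gamma * L)).
  { apply Rmult_le_pos; [apply pow2_ge_0| left; apply Rinv_0_lt_compat; nra]. }
  replace (- x ^ 2 / (4 * gamma * L)) with (- (x ^ 2 * / (4 * gamma * L))) by (unfold Rdiv; ring).
  lra.
Qed.

Lemma key gamma beta t0 (hg : 0 < gamma) n : forall t, t0 < t ->
  w gamma beta t0 n 0 t = cc gamma beta n * P n (t - t0) /\
  forall x, Rabs (w gamma beta t0 n x t) <= Rabs (cc gamma beta n) * P n (t - t0).
Proof.
  assert (HR : 0 < Rpower (PI * gamma) (3/2)) by (unfold Rpower; apply exp_pos).
  assert (Hz : forall y, - 0 ^ 2 / y = 0) by (intros; unfold Rdiv; ring).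
  induction n as [|n IH]; intros t Ht; set (L := t - t0);
    assert (HL : 0 < L) by (unfold L; lra);
    assert (HsL : 0 < sqrt L) by (apply sqrt_lt_R0; lra).
  - cbn [w cc]. destruct (Rle_dec t t0) as [|_]; [lra|]. fold L. split.
    + rewrite Hz, exp_0. unfold C0, P. simpl. field. lra.
    + intros x. unfold C0, P. rewrite pow_O.
      destruct (exp_neg_le1 gamma x L hg HL) as [He1 He2].
      assert (HA : 0 < / (4 * Rpower (PI * gamma) (3 / 2) * sqrt L)).
      { apply Rinv_0_lt_compat. apply Rmult_lt_0_compat; lra. }
      assert (HB : 0 < / (4 * Rpower (PI * gamma) (3 / 2))).
      { apply Rinv_0_lt_compat. lra. }
      rewrite Rabs_mult, (Rabs_right (/ (4 * Rpower (PI * gamma) (3 / 2) * sqrt L))) by lra.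
      rewrite (Rabs_right (exp _)) by lra. rewrite (Rabs_right (/ (4 * Rpower (PI * gamma) (3 / 2)))) by lra.
      replace (/ (4 * Rpower (PI * gamma) (3 / 2)) * (1 / sqrt L))
        with (/ (4 * Rpower (PI * gamma) (3 / 2) * sqrt L) * 1) by (field; lra).
      apply Rmult_le_compat_l; lra.
  - cbn [w cc]. destruct (Rle_dec t t0) as [|_]; [lra|]. fold L.
    set (ccn := cc gamma beta n).
    set (H := fun (c x s : R) => c * P n (s - t0) / sqrt (t - s) * exp (- x ^ 2 / (4 * gamma * (t - s)))).
    assert (Hext : forall x s, t0 < s < t ->
       H ccn x s = w gamma beta t0 n 0 s / sqrt (t - s) * exp (- x ^ 2 / (4 * gamma * (t - s)))).
    { intros x s Hs. unfold H. rewrite (proj1 (IH s ltac:(lra))). reflexivity. }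
    assert (Hsc : forall c, IMP (H c 0) t0 t (c * P n L / sqrt L * L * J n)).
    { intros c. unfold L. apply (SCALE _ (gg n)); [lra| apply J_IMP| |].
      - intros s Hs. apply key_cont; auto.
      - intros u Hu. fold L. unfold H, gg. rewrite !Hz, exp_0.
        replace (t0 + L * u - t0) with (L * u) by ring.
        replace (t - (t0 + L * u)) with (L * (1 - u)) by (unfold L; ring).
        rewrite P_mult, sqrt_mult by lra.
        assert (0 < sqrt (1 - u)) by (apply sqrt_lt_R0; lra).
        field. split; lra. }
    split.
    + rewrite (improper_int_eq _ t0 t (ccn * P n L / sqrt L * L * J n)); [|lra|].
      * rewrite P_S by lra.
        assert (EL : L / sqrt L = sqrt L) by (pattern L at 1; rewrite <- (sqrt_sqrt L) by lra; field; lra).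
        replace (ccn * P n L / sqrt L * L * J n) with (ccn * J n * (P n L * (L / sqrt L))) by (field; lra).
        rewrite EL. ring.
      * apply (IMP_ext (H ccn 0)); [apply Hext| apply Hsc].
    + intros x.
      assert (Hc1 : forall s, t0 < s < t -> continuous (H ccn x) s).
      { intros s Hs. apply key_cont; auto. }
      assert (Hd1 : forall s, t0 < s < t -> Rabs (H ccn x s) <= H (Rabs ccn) 0 s).
      { intros s Hs. unfold H. rewrite Hz, exp_0.
        destruct (exp_neg_le1 gamma x (t - s) hg ltac:(lra)) as [He1 He2].
        assert (0 < sqrt (t - s)) by (apply sqrt_lt_R0; lra).
        assert (0 <= P n (s - t0)) by (apply P_nonneg; lra).
        unfold Rdiv. rewrite !Rabs_mult, (Rabs_right (P n (s - t0))) by lra.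
        rewrite (Rabs_right (/ sqrt (t - s))) by (left; apply Rinv_0_lt_compat; lra).
        rewrite (Rabs_right (exp _)) by lra.
        rewrite Rmult_1_r. 
        assert (0 <= Rabs ccn * P n (s - t0) * / sqrt (t - s)).
        { apply Rmult_le_pos; [apply Rmult_le_pos; [apply Rabs_pos| lra]| left; apply Rinv_0_lt_compat; lra]. }
        nra. }
      destruct (DOM (H ccn x) (H (Rabs ccn) 0) t0 t (Rabs ccn * P n L / sqrt L * L * J n)
        ltac:(lra) Hc1 (Hsc _) Hd1) as [l [Hl Hlb]].
      rewrite (improper_int_eq _ t0 t l); [|lra|].
      2: { apply (IMP_ext (H ccn x)); [apply Hext| apply Hl]. }
      rewrite P_S by lra. rewrite !Rabs_mult.
      rewrite Rmult_assoc. apply Rmult_le_compat_l; [apply Rabs_pos|].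
      assert (0 <= P n L) by (apply P_nonneg; lra).
      assert (EL : L / sqrt L = sqrt L) by (pattern L at 1; rewrite <- (sqrt_sqrt L) by lra; field; lra).
      replace (Rabs ccn * P n L / sqrt L * L * J n) with (Rabs ccn * P n L * (L / sqrt L) * J n) in Hlb
        by (field; lra). rewrite EL in Hlb.
      assert (0 <= Rabs ccn * P n L * sqrt L) by (apply Rmult_le_pos; [apply Rmult_le_pos; [apply Rabs_pos| lra]| lra]).
      pose proof (Rle_abs (J n)).
      assert (Rabs ccn * P n L * sqrt L * J n <= Rabs ccn * P n L * sqrt L * Rabs (J n)) by
        (apply Rmult_le_compat_l; lra).
      replace (Rabs ccn * Rabs (J n) * (P n L * sqrt L)) with (Rabs ccn * P n L * sqrt L * Rabs (J n)) by ring.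
      lra.
Qed.

Definition Slim {X : Type} (u : nat -> X -> R) (x : X) : R :=
  epsilon (inhabits 0) (fun l => Un_cv (fun n => sum_f_R0 (fun k => u k x) n) l).

Lemma half_pos n : 0 < (/ 2) ^ n.
Proof. apply pow_lt. lra. Qed.

Lemma le_eps a b : (forall e, 0 < e -> a <= b + e) -> a <= b.
Proof.
  intros H. destruct (Rle_dec a b) as [|Hn]; auto. exfalso.
  specialize (H ((a - b) / 2) ltac:(lra)). lra.
Qed.

Lemma geo_small C e : 0 < e -> exists N : nat, forall n, (n >= N)%nat -> C * (/ 2) ^ n < e.
Proof.
  intros He. assert (Hc : 0 < Rabs C + 1) by (pose proof (Rabs_pos C); lra).
  destruct (pow_lt_1_zero (/ 2) ltac:(rewrite Rabs_right; lra) (e / (Rabs C + 1)))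
      as [N HN]; [apply Rdiv_lt_0_compat; lra|].
  exists N. intros n Hn. specialize (HN n Hn). rewrite Rabs_right in HN by (left; apply half_pos).
  pose proof (half_pos n).
  assert (C * (/2) ^ n <= Rabs C * (/2) ^ n) by
    (apply Rmult_le_compat_r; [lra| apply Rle_abs]).
  assert (Rabs C * (/2) ^ n <= Rabs C * (e / (Rabs C + 1))) by
    (apply Rmult_le_compat_l; [apply Rabs_pos| lra]).
  replace (Rabs C * (e / (Rabs C + 1))) with (e - e / (Rabs C + 1)) in H1 by (field; lra).
  assert (0 < e / (Rabs C + 1)) by (apply Rdiv_lt_0_compat; lra). lra.
Qed.

Lemma UNIF {X : Type} (u : nat -> X -> R) (A : X -> Prop) (C : R) (N0 : nat) :
  (forall n x, (N0 <= n)%nat -> A x -> Rabs (u n x) <= C * (/ 2) ^ n) ->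
  forall eps, 0 < eps -> exists N : nat, forall n : nat, (N <= n)%nat -> forall x, A x ->
    Rabs (sum_f_R0 (fun k => u k x) n - Slim u x) < eps.
Proof.
  intros Hb eps He.
  set (Ps := fun x n => sum_f_R0 (fun k => u k x) n).
  assert (Tail : forall x n p, A x -> (N0 <= n)%nat ->
    Rabs (Ps x (n + p)%nat - Ps x n) <= C * (/ 2) ^ n - C * (/ 2) ^ (n + p)).
  { intros x n p Hx Hn. induction p as [|p IH].
    - rewrite Nat.add_0_r. unfold Rminus. rewrite !Rplus_opp_r, Rabs_R0. lra.
    - replace (n + S p)%nat with (S (n + p)) by lia. unfold Ps in *. rewrite tech5.
      replace (sum_f_R0 (fun k : nat => u k x) (n + p) + u (S (n + p)) x - sum_f_R0 (fun k : nat => u k x) n)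
        with ((sum_f_R0 (fun k : nat => u k x) (n + p) - sum_f_R0 (fun k : nat => u k x) n) + u (S (n + p)) x) by ring.
      eapply Rle_trans; [apply Rabs_triang|].
      specialize (Hb (S (n + p)) x ltac:(lia) Hx).
      replace ((/ 2) ^ S (n + p)) with ((/ 2) ^ (n + p) * / 2) in * by (simpl; ring).
      lra. }
  assert (T2 : forall x n m, A x -> (N0 <= n)%nat -> (n <= m)%nat ->
    Rabs (Ps x m - Ps x n) <= C * (/ 2) ^ n).
  { intros x n m Hx Hn Hm.
    assert (HC : 0 <= C * (/2) ^ m).
    { eapply Rle_trans; [apply Rabs_pos| apply (Hb m x); auto; lia]. }
    replace m with (n + (m - n))%nat in * by lia.
    specialize (Tail x n (m - n)%nat Hx Hn). lra. }
  assert (Hlim : forall x, A x -> Un_cv (Ps x) (Slim u x)).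
  { intros x Hx. unfold Slim. apply epsilon_spec.
    destruct (Rcomplete.R_complete (Ps x)) as [l Hl]; [|exists l; exact Hl].
    intros e He'.
    destruct (geo_small C (e / 2) ltac:(lra)) as [N HN].
    set (N' := max N N0).
    exists N'. intros n m Hn Hm. unfold Rdist.
    pose proof (T2 x N' n Hx ltac:(lia) ltac:(lia)).
    pose proof (T2 x N' m Hx ltac:(lia) ltac:(lia)).
    specialize (HN N' ltac:(lia)).
    replace (Ps x n - Ps x m) with ((Ps x n - Ps x N') - (Ps x m - Ps x N')) by ring.
    eapply Rle_lt_trans; [apply Rabs_triang|]. rewrite Rabs_Ropp. lra. }
  assert (Hfin : forall x n, A x -> (N0 <= n)%nat -> Rabs (Ps x n - Slim u x) <= C * (/ 2) ^ n).
  { intros x n Hx Hn. apply le_eps. intros e He'.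
    destruct (Hlim x Hx e He') as [M HM].
    specialize (HM (max M n) ltac:(lia)). unfold Rdist in HM.
    pose proof (T2 x n (max M n) Hx Hn ltac:(lia)).
    replace (Ps x n - Slim u x) with (- (Ps x (max M n) - Ps x n) + (Ps x (max M n) - Slim u x)) by ring.
    eapply Rle_trans; [apply Rabs_triang|]. rewrite Rabs_Ropp. lra. }
  destruct (geo_small C eps He) as [N HN].
  exists (max N N0). intros n Hn x Hx.
  eapply Rle_lt_trans; [apply (Hfin x n Hx); lia| apply HN; lia].
Qed.

Lemma wbound gamma beta t0 (hg : 0 < gamma) T (HT : 0 < T) : exists C (N0 : nat),
  forall n y s, (N0 <= n)%nat -> t0 < s -> s - t0 <= T ->
    Rabs (w gamma beta t0 n y s) <= C * (/ 2) ^ n.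
Proof.
  set (K := Rabs (- beta / sqrt (PI * gamma))).
  assert (HK : 0 <= K) by apply Rabs_pos.
  set (a := fun m => Rabs (cc gamma beta (S m)) * sqrt T ^ m).
  assert (HsT : 0 < sqrt T) by (apply sqrt_lt_R0; lra).
  assert (Ha : forall m, 0 <= a m).
  { intros m. unfold a. apply Rmult_le_pos; [apply Rabs_pos| apply pow_le; lra]. }
  assert (Hrec : forall m, a (S m) <= K * (2 / sqrt (1 + INR m / 4)) * sqrt T * a m).
  { intros m. unfold a. change (cc gamma beta (S (S m))) with
      ((- beta / sqrt (PI * gamma)) * (cc gamma beta (S m) * J (S m))).
    rewrite !Rabs_mult. fold K. destruct (JS_spec m) as [_ HJ].
    change (sqrt T ^ S m) with (sqrt T * sqrt T ^ m).
    assert (0 <= Rabs (cc gamma beta (S m))) by apply Rabs_pos.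
    assert (0 <= sqrt T ^ m) by (apply pow_le; lra).
    replace (K * (Rabs (cc gamma beta (S m)) * Rabs (J (S m))) * (sqrt T * sqrt T ^ m))
      with ((K * Rabs (cc gamma beta (S m)) * sqrt T * sqrt T ^ m) * Rabs (J (S m))) by ring.
    replace (K * (2 / sqrt (1 + INR m / 4)) * sqrt T * (Rabs (cc gamma beta (S m)) * sqrt T ^ m))
      with ((K * Rabs (cc gamma beta (S m)) * sqrt T * sqrt T ^ m) * (2 / sqrt (1 + INR m / 4))) by ring.
    apply Rmult_le_compat_l; auto.
    repeat apply Rmult_le_pos; lra. }
  destruct (INR_archimed 1 (64 * K * K * T) ltac:(lra)) as [M0 HM0].
  rewrite Rmult_1_r in HM0.
  assert (Hhalf : forall m, (M0 <= m)%nat -> a (S m) <= a m / 2).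
  { intros m Hm. eapply Rle_trans; [apply Hrec|].
    apply le_INR in Hm.
    assert (Hq : 0 < sqrt (1 + INR m / 4)) by (apply sqrt_lt_R0; pose proof (pos_INR m); lra).
    assert (Hs : 4 * K * sqrt T <= sqrt (1 + INR m / 4)).
    { rewrite <- (sqrt_square (4 * K * sqrt T)) by (apply Rmult_le_pos; lra).
      apply sqrt_le_1_alt.
      replace (4 * K * sqrt T * (4 * K * sqrt T)) with (16 * K * K * (sqrt T * sqrt T)) by ring.
      rewrite sqrt_sqrt by lra. lra. }
    assert (K * (2 / sqrt (1 + INR m / 4)) * sqrt T <= / 2).
    { replace (K * (2 / sqrt (1 + INR m / 4)) * sqrt T) with ((4 * K * sqrt T) / sqrt (1 + INR m / 4) * / 2)
        by (field; lra).
      rewrite <- (Rmult_1_l (/ 2)) at 2. apply Rmult_le_compat_r; [lra|].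
      apply Rmult_le_reg_r with (sqrt (1 + INR m / 4)); auto.
      unfold Rdiv. rewrite Rmult_assoc, Rinv_l by lra. lra. }
    specialize (Ha m). unfold Rdiv. rewrite (Rmult_comm (a m)). apply Rmult_le_compat_r; auto. }
  assert (Hgeo : forall p, a (M0 + p)%nat <= a M0 * (/ 2) ^ p).
  { induction p as [|p IH].
    - rewrite Nat.add_0_r. simpl. lra.
    - replace (M0 + S p)%nat with (S (M0 + p)) by lia.
      eapply Rle_trans; [apply Hhalf; lia|]. simpl. lra. }
  exists (a M0 * 2 ^ (S M0)), (S M0).
  intros n y s Hn Hs HsT'.
  destruct n as [|m]; [lia|].
  assert (HL : 0 < s - t0) by lra.
  destruct (key gamma beta t0 hg (S m) s Hs) as [_ Kb].
  eapply Rle_trans; [apply Kb|].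
  assert (EP : P (S m) (s - t0) = sqrt (s - t0) ^ m).
  { unfold P. assert (0 < sqrt (s - t0)) by (apply sqrt_lt_R0; lra). simpl. field. lra. }
  rewrite EP.
  apply Rle_trans with (a m).
  { unfold a. apply Rmult_le_compat_l; [apply Rabs_pos|]. apply pow_incr. split.
    - apply sqrt_pos.
    - apply sqrt_le_1_alt. lra. }
  replace m with (M0 + (m - M0))%nat by lia.
  eapply Rle_trans; [apply Hgeo|].
  replace (S (M0 + (m - M0))) with (S M0 + (m - M0))%nat by lia.
  rewrite pow_add, Rmult_assoc. apply Rmult_le_compat_l; [apply Ha|].
  rewrite <- Rmult_assoc, <- Rpow_mult_distr, Rinv_r, pow1 by lra. lra.
Qed.

Lemma vbound gamma b beta t0 n x1 x2 x3 s : 0 < gamma -> 0 <= b -> t0 < s ->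
  Rabs (v gamma b beta t0 n x1 x2 x3 s) <= / (s - t0) * Rabs (w gamma beta t0 n x3 s).
Proof.
  intros hg hb Hs. unfold v. set (L := s - t0). assert (HL : 0 < L) by (unfold L; lra).
  assert (E1 : 0 < exp (- b * L) <= 1).
  { split; [apply exp_pos| apply exp_le1]. nra. }
  assert (E2 : 0 < exp (- (x1 ^ 2 + x2 ^ 2) / (4 * gamma * L)) <= 1).
  { split; [apply exp_pos| apply exp_le1].
    assert (0 <= (x1 ^ 2 + x2 ^ 2) * / (4 * gamma * L)).
    { apply Rmult_le_pos; [pose proof (pow2_ge_0 x1); pose proof (pow2_ge_0 x2); lra|
        left; apply Rinv_0_lt_compat; nra]. }
    replace (- (x1 ^ 2 + x2 ^ 2) / (4 * gamma * L)) with (- ((x1 ^ 2 + x2 ^ 2) * / (4 * gamma * L)))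
      by (unfold Rdiv; ring). lra. }
  assert (HiL : 0 < / L) by (apply Rinv_0_lt_compat; lra).
  rewrite !Rabs_mult. unfold Rdiv. rewrite Rabs_mult.
  rewrite (Rabs_right (exp (- b * L))), (Rabs_right (/ L)), (Rabs_right (exp _)) by lra.
  pose proof (Rabs_pos (w gamma beta t0 n x3 s)).
  apply Rmult_le_compat_r; auto.
  replace (/ L) with (1 * / L * 1) at 2 by ring.
  apply Rmult_le_compat; try nra.
Qed.

Theorem mainTheorem10 (gamma b t0 beta : R)
  (hgamma : 0 < gamma) (hb : 0 <= b) (hbeta : 0 <= beta) :
  (exists S Sabs : R -> R -> R,
     series_loc_unif_2 t0 (fun n x3 t => w gamma beta t0 n x3 t) S /\
     series_loc_unif_2 t0 (fun n x3 t => Rabs (w gamma beta t0 n x3 t)) Sabs) /\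
  (exists S Sabs : R -> R -> R -> R -> R,
     series_loc_unif_4 t0 (fun n x1 x2 x3 t => v gamma b beta t0 n x1 x2 x3 t) S /\
     series_loc_unif_4 t0 (fun n x1 x2 x3 t => Rabs (v gamma b beta t0 n x1 x2 x3 t)) Sabs).
Proof.
  split.
  - set (U := fun n (p : R * R) => w gamma beta t0 n (fst p) (snd p)).
    set (Ua := fun n (p : R * R) => Rabs (w gamma beta t0 n (fst p) (snd p))).
    exists (fun y s => Slim U (y, s)), (fun y s => Slim Ua (y, s)). split.
    + intros x3 t Hx3 Ht. exists ((t - t0) / 2). split; [lra|]. intros eps He.
      destruct (wbound gamma beta t0 hgamma (2 * (t - t0)) ltac:(lra)) as [C [N0 Hb]].
      destruct (UNIF U (fun p => t0 < snd p /\ snd p - t0 <= 2 * (t - t0)) C N0) with (eps := eps)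
        as [N HN]; auto.
      { intros n p Hn [Hp1 Hp2]. apply Hb; auto. }
      exists N. intros n Hn y s Hy Hs Hyx Hst.
      apply Rabs_def2 in Hst.
      apply (HN n Hn (y, s)). simpl. split; lra.
    + intros x3 t Hx3 Ht. exists ((t - t0) / 2). split; [lra|]. intros eps He.
      destruct (wbound gamma beta t0 hgamma (2 * (t - t0)) ltac:(lra)) as [C [N0 Hb]].
      destruct (UNIF Ua (fun p => t0 < snd p /\ snd p - t0 <= 2 * (t - t0)) C N0) with (eps := eps)
        as [N HN]; auto.
      { intros n p Hn [Hp1 Hp2]. unfold Ua. rewrite Rabs_Rabsolu. apply Hb; auto. }
      exists N. intros n Hn y s Hy Hs Hyx Hst.
      apply Rabs_def2 in Hst.
      apply (HN n Hn (y, s)). simpl. split; lra.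
  - set (V := fun n (p : R * R * R * R) =>
      v gamma b beta t0 n (fst (fst (fst p))) (snd (fst (fst p))) (snd (fst p)) (snd p)).
    set (Va := fun n (p : R * R * R * R) =>
      Rabs (v gamma b beta t0 n (fst (fst (fst p))) (snd (fst (fst p))) (snd (fst p)) (snd p))).
    exists (fun y1 y2 y3 s => Slim V (y1, y2, y3, s)), (fun y1 y2 y3 s => Slim Va (y1, y2, y3, s)).
    split.
    + intros x1 x2 x3 t Hx3 Ht. exists ((t - t0) / 2). split; [lra|]. intros eps He.
      destruct (wbound gamma beta t0 hgamma (2 * (t - t0)) ltac:(lra)) as [C [N0 Hb]].
      destruct (UNIF V (fun p => (t - t0) / 2 < snd p - t0 /\ snd p - t0 <= 2 * (t - t0))
        (2 / (t - t0) * C) N0) with (eps := eps) as [N HN]; auto.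
      { intros n p Hn [Hp1 Hp2]. unfold V.
        eapply Rle_trans; [apply vbound; auto; lra|].
        specialize (Hb n (snd (fst p)) (snd p) Hn ltac:(lra) Hp2).
        rewrite Rmult_assoc. apply Rmult_le_compat; auto.
        - left; apply Rinv_0_lt_compat; lra.
        - apply Rabs_pos.
        - replace (2 / (t - t0)) with (/ ((t - t0) / 2)) by (field; lra).
          apply Rinv_le_contravar; lra. }
      exists N. intros n Hn y1 y2 y3 s Hy Hs H1 H2 H3 Hst.
      apply Rabs_def2 in Hst.
      apply (HN n Hn (y1, y2, y3, s)). simpl. split; lra.
    + intros x1 x2 x3 t Hx3 Ht. exists ((t - t0) / 2). split; [lra|]. intros eps He.
      destruct (wbound gamma beta t0 hgamma (2 * (t - t0)) ltac:(lra)) as [C [N0 Hb]].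
      destruct (UNIF Va (fun p => (t - t0) / 2 < snd p - t0 /\ snd p - t0 <= 2 * (t - t0))
        (2 / (t - t0) * C) N0) with (eps := eps) as [N HN]; auto.
      { intros n p Hn [Hp1 Hp2]. unfold Va. rewrite Rabs_Rabsolu.
        eapply Rle_trans; [apply vbound; auto; lra|].
        specialize (Hb n (snd (fst p)) (snd p) Hn ltac:(lra) Hp2).
        rewrite Rmult_assoc. apply Rmult_le_compat; auto.
        - left; apply Rinv_0_lt_compat; lra.
        - apply Rabs_pos.
        - replace (2 / (t - t0)) with (/ ((t - t0) / 2)) by (field; lra).
          apply Rinv_le_contravar; lra. }
      exists N. intros n Hn y1 y2 y3 s Hy Hs H1 H2 H3 Hst.
      apply Rabs_def2 in Hst.
      apply (HN n Hn (y1, y2, y3, s)). simpl. split; lra.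
Qed.
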